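(* Consider DODA in the setting of the context. Assume the maximum delay is bounded by $\tau$, that the feedback associated with time step $t$ is the whole vector field $V_t=\nabla f_t$ (which can be evaluated at any point immediately, without delay), and that each $V_t$ is $L$-Lipschitz continuous. Take guesses $\tilde g_{t+1/2}=\tilde V_t(x_t)$, where $\tilde V_t=V_s$ for some $s\in\mathcal S_t$, and learning rates satisfying $\eta_{t+1}\le\eta_t$, $(2\tau+1)\eta_t\le\gamma_t$ and $2\gamma_t^2L^2\le1$ for all $t$. Then for every $p\in\mathcal V$ the regret evaluated at $x_{3/2},\dots,x_{T+1/2}$ satisfies \[R_T(p)\le\frac{\|p-x_1\|^2}{2\eta_T}+\sum_{t=1}^T\gamma_t\|V_t(x_t)-\tilde V_t(x_t)\|^2.\]
   Context: Unconstrained Euclidean setting: $\mathcal V$ finite-dimensional Euclidean space; losses $f_t:\mathcal V\to\mathbb R$ convex and differentiable. At each round $t=1,\dots,T$ one agent is active. $\mathcal S_t\subset\{1,\dots,t-1\}$ is the set of timestamps $s$ whose feedback is available to the active agent at time $t$ (nondecreasing in time for each agent). DODA: given $x_1\in\mathcal V$, $x_t=x_1-\eta_t\sum_{s\in\mathcal S_t}g_{s+1/2}$ and $x_{t+1/2}=x_t-\gamma_t\tilde g_{t+1/2}$; the agent plays $x_{t+1/2}$ and $g_{t+1/2}=V_t(x_{t+1/2})$. Regret: $R_T(p)=\sum_{t=1}^Tf_t(x_{t+1/2})-\sum_{t=1}^Tf_t(p)$. Maximum delay bounded by $\tau$: $\{1,\dots,t-\tau-1\}\subset\mathcal S_t$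 for all $t$. *)

(* Defs.v *)
From HB Require Import structures.
From mathcomp Require Import all_boot all_order all_algebra.
From mathcomp Require Import all_classical all_reals all_analysis.
Set Implicit Arguments. Unset Strict Implicit. Unset Printing Implicit Defensive.
Import Order.TTheory GRing.Theory Num.Theory.
Import numFieldNormedType.Exports.
Local Open Scope ring_scope.

Definition dotp {R : realType} {n : nat} (u v : 'rV[R]_n) : R := (u *m v^T) 0 0.
Definition enorm {R : realType} {n : nat} (u : 'rV[R]_n) : R := Num.sqrt (dotp u u).

Definition convexf {R : realType} {n : nat} (f : 'rV[R]_n -> R) : Prop :=
  forall (x y : 'rV[R]_n) (a : R), 0 <= a <= 1 ->
    f (a *: x + (1 - a) *: y) <= a * f x + (1 - a) * f y.

Definition has_gradient {R : realType} {n : nat}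
  (f : 'rV[R]_n -> R) (g : 'rV[R]_n -> 'rV[R]_n) : Prop :=
  forall x : 'rV[R]_n, differentiable f x /\
    forall v : 'rV[R]_n, 'D_v f x = dotp (g x) v.

Definition lipschitz_vf {R : realType} {n : nat} (L : R)
  (g : 'rV[R]_n -> 'rV[R]_n) : Prop :=
  0 <= L /\ forall x y : 'rV[R]_n, enorm (g x - g y) <= L * enorm (x - y).

(* Main.v *)
Require Import Defs.
From HB Require Import structures.
From mathcomp Require Import all_boot all_order all_algebra.
From mathcomp Require Import all_classical all_reals all_analysis.
From mathcomp Require Import ring lra zify.
Import Order.TTheory GRing.Theory Num.Theory.
Import numFieldNormedType.Exports.
Local Open Scope ring_scope.

Section Dot.
Context {R : realType} {n : nat}.
Implicit Types u v w : 'rV[R]_n.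

Lemma dotpE u v : dotp u v = \sum_i u 0 i * v 0 i.
Proof. by rewrite /dotp !mxE; apply: eq_bigr => i _; rewrite !mxE. Qed.

Lemma dotpC u v : dotp u v = dotp v u.
Proof. by rewrite !dotpE; apply: eq_bigr => i _; rewrite mulrC. Qed.

Lemma dotpDl u v w : dotp (u + v) w = dotp u w + dotp v w.
Proof. by rewrite !dotpE -big_split; apply: eq_bigr => i _; rewrite !mxE mulrDl. Qed.

Lemma dotpZl a u v : dotp (a *: u) v = a * dotp u v.
Proof. by rewrite !dotpE mulr_sumr; apply: eq_bigr => i _; rewrite !mxE mulrA. Qed.

Lemma dotpNl u v : dotp (- u) v = - dotp u v.
Proof. by rewrite -scaleN1r dotpZl mulN1r. Qed.

Lemma dotpBl u v w : dotp (u - v) w = dotp u w - dotp v w.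
Proof. by rewrite dotpDl dotpNl. Qed.

Lemma dotpDr u v w : dotp w (u + v) = dotp w u + dotp w v.
Proof. by rewrite !(dotpC w) dotpDl. Qed.
Lemma dotpZr a u v : dotp v (a *: u) = a * dotp v u.
Proof. by rewrite !(dotpC v) dotpZl. Qed.
Lemma dotpNr u v : dotp v (- u) = - dotp v u.
Proof. by rewrite !(dotpC v) dotpNl. Qed.
Lemma dotpBr u v w : dotp w (u - v) = dotp w u - dotp w v.
Proof. by rewrite dotpDr dotpNr. Qed.
Lemma dotp0r u : dotp u 0 = 0.
Proof. by rewrite dotpE big1 // => i _; rewrite mxE mulr0. Qed.
Lemma dotp0l u : dotp 0 u = 0.
Proof. by rewrite dotpC dotp0r. Qed.

Lemma dotp_ge0 u : 0 <= dotp u u.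
Proof. by rewrite dotpE; apply: sumr_ge0 => i _; rewrite -expr2 sqr_ge0. Qed.

Lemma dotp_sumr (I : Type) (r : seq I) (P : pred I) (F : I -> 'rV[R]_n) u :
  dotp u (\sum_(i <- r | P i) F i) = \sum_(i <- r | P i) dotp u (F i).
Proof.
elim/big_rec2: _ => [|i y1 y2 _ <-]; first by rewrite dotp0r.
by rewrite dotpDr.
Qed.

Lemma dotp_suml (I : Type) (r : seq I) (P : pred I) (F : I -> 'rV[R]_n) u :
  dotp (\sum_(i <- r | P i) F i) u = \sum_(i <- r | P i) dotp (F i) u.
Proof. rewrite dotpC dotp_sumr; apply: eq_bigr => i _; exact: dotpC. Qed.

Lemma enorm_sq u : enorm u ^+ 2 = dotp u u.
Proof. by rewrite /enorm sqr_sqrtr // dotp_ge0. Qed.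

Lemma enorm_ge0 u : 0 <= enorm u.
Proof. exact: sqrtr_ge0. Qed.

End Dot.

Lemma conv_grad (R : realType) n (f : 'rV[R]_n -> R) g x p :
  convexf f -> has_gradient f g -> f x - f p <= dotp (g x) (x - p).
Proof.
move=> cf hg; have [df Dg] := hg x.
have hd : derivable f x (p - x) := diff_derivable (v:=p - x) df.
have key : 'D_(p - x) f x <= f p - f x.
  rewrite /derive (cvg_at_rightE _ _ hd).
  apply: limr_le.
    apply/cvg_ex; exists (derive f x (p - x)).
    move=> A /hd /nbhs_ballP [_ /posnumP[e] xe_A].
    by exists e%:num => //= y xe_y /gt_eqF/negbT/xe_A; exact.
  near=> h.
  have h0 : 0 < h by near: h; exact: nbhs_right_gt.
  have h1 : h < 1 by near: h; exact: nbhs_right_lt.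
  rewrite /= /shift.
  have e : h *: (p - x) + x = h *: p + (1 - h) *: x.
    by rewrite scalerBr scalerBl scale1r -addrA [- _ + x]addrC.
  rewrite e.
  have := cf p x h; rewrite (ltW h0) (ltW h1) => /(_ isT) hc.
  rewrite -[X in _ <= X](mulKf (lt0r_neq0 h0)) /GRing.scale /=.
  rewrite ler_pM2l ?invr_gt0 //; lra.
move: key; rewrite Dg -[x - p]opprB dotpNr; lra.
Unshelve. all: by end_near.
Qed.

Section Alg.
Variables (R : realType) (n : nat).
Notation V := 'rV[R]_n.

Lemma eta_mono (eta : nat -> R) : (forall t, (1 <= t)%N -> eta t.+1 <= eta t) ->
  forall s t, (1 <= s)%N -> (s <= t)%N -> eta t <= eta s.
Proof.
move=> hm s t s1; elim: t => [|t IH]; first by rewrite leqn0 => /eqP ->.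
rewrite leq_eqVlt => /orP[/eqP -> //|]; rewrite ltnS => st.
by apply: le_trans (IH st); apply: hm; apply: leq_trans st.
Qed.

Lemma partA0 (g : nat -> V) (eta : nat -> R) :
  (forall t, (1 <= t)%N -> 0 < eta t) ->
  (forall t, (1 <= t)%N -> eta t.+1 <= eta t) ->
  forall T, \sum_(1 <= t < T.+1) (- (eta t * dotp (g t) (\sum_(1 <= s < t) g s))
                                  - eta t / 2 * dotp (g t) (g t))
   <= - (eta T / 2 * dotp (\sum_(1 <= s < T.+1) g s) (\sum_(1 <= s < T.+1) g s)).
Proof.
move=> hp hm; elim=> [|T IH].
  by rewrite !big_geq // dotp0r mulr0 oppr0.
rewrite big_nat_recr //= [in X in _ <= X]big_nat_recr //=.
set Z := \sum_(1 <= s < T.+1) g s.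
rewrite !(dotpDl, dotpDr) (dotpC Z (g T.+1)).
have hZ : 0 <= dotp Z Z := dotp_ge0 Z.
have hg : 0 <= dotp (g T.+1) (g T.+1) := dotp_ge0 _.
have hle : eta T.+1 * dotp Z Z <= eta T * dotp Z Z.
  clear hg; case: T IH @Z hZ => [|T] IH Z hZ.
    by rewrite /Z big_geq // dotp0r !mulr0.
  by apply: ler_wpM2r => //; apply: hm.
lra.
Qed.

Lemma two_dot_le (z w : V) (a : R) : 0 < a ->
  dotp z w <= a / 2 * dotp z z + dotp w w / (2 * a).
Proof.
move=> a0.
have h := dotp_ge0 (a *: z - w).
rewrite !(dotpDl, dotpDr, dotpNl, dotpNr, dotpZl, dotpZr) (dotpC w z) in h.
set k := dotp w w / (2 * a).
have hk : k * (2 * a) = dotp w w by rewrite /k divfK // mulf_neq0 // lt0r_neq0.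
have : 0 <= a * (a * dotp z z - 2 * dotp z w + 2 * k).
  have -> : a * (a * dotp z z - 2 * dotp z w + 2 * k) =
    a * a * dotp z z - 2 * a * dotp z w + k * (2 * a) by ring.
  rewrite hk; nra.
by rewrite pmulr_rge0 //; lra.
Qed.

Lemma partA (g : nat -> V) (eta : nat -> R) x1 p T :
  (forall t, (1 <= t)%N -> 0 < eta t) ->
  (forall t, (1 <= t)%N -> eta t.+1 <= eta t) -> (1 <= T)%N ->
  \sum_(1 <= t < T.+1) (dotp (g t) (x1 - p) - eta t * dotp (g t) (\sum_(1 <= s < t) g s))
  <= dotp (p - x1) (p - x1) / (2 * eta T)
     + \sum_(1 <= t < T.+1) eta t / 2 * dotp (g t) (g t).
Proof.
move=> hp hm T1.
have h0 := @partA0 g eta hp hm T.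
have h1 := @two_dot_le (\sum_(1 <= s < T.+1) g s) (x1 - p) (eta T) (hp T T1).
have e : dotp (p - x1) (p - x1) = dotp (x1 - p) (x1 - p).
  by rewrite -opprB dotpNl dotpNr opprK.
rewrite e sumrB -dotp_suml.
rewrite sumrB sumrN in h0.
lra.
Qed.
End Alg.

Lemma count_window (P : pred nat) (a b lo k : nat) :
  (forall i, (a <= i < b)%N -> P i -> (lo <= i < lo + k)%N) ->
  (count P (index_iota a b) <= k)%N.
Proof.
move=> h; rewrite -size_filter.
rewrite -[X in (_ <= X)%N](size_iota lo k).
apply: uniq_leq_size; first by rewrite filter_uniq // iota_uniq.
move=> i; rewrite mem_filter mem_index_iota mem_iota => /andP[Pi ri].
exact: h.
Qed.

Lemma sum_const_window (R : realType) (P : pred nat) (a b lo k : nat) (c : R) :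
  0 <= c ->
  (forall i, (a <= i < b)%N -> P i -> (lo <= i < lo + k)%N) ->
  \sum_(a <= i < b | P i) c <= k%:R * c.
Proof.
move=> c0 h.
rewrite (eq_bigr (fun i => c * 1)); last by move=> i _; rewrite mulr1.
rewrite -mulr_sumr mulrC.
rewrite ler_wpM2r //.
have -> : \sum_(a <= i < b | P i) (1 : R) = (\sum_(a <= i < b | P i) 1%N)%:R.
  by rewrite natr_sum.
rewrite sum1_count ler_nat.
exact: count_window h.
Qed.

Section PB.
Context {R : realType} {n : nat}.
Notation V := 'rV[R]_n.

Lemma partB (g : nat -> V) (eta : nat -> R) (S : nat -> nat -> bool) (tau T : nat) :
  (forall t s, (1 <= s)%N -> (s + tau < t)%N -> S t s) ->
  (forall t, (1 <= t)%N -> 0 < eta t) ->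
  (forall t, (1 <= t)%N -> eta t.+1 <= eta t) ->
  \sum_(1 <= t < T.+1) eta t * dotp (g t) (\sum_(1 <= s < t | ~~ S t s) g s)
  <= \sum_(1 <= t < T.+1) tau%:R * eta t * dotp (g t) (g t).
Proof.
move=> hS hp hm.
pose a u := eta u * dotp (g u) (g u) / 2.
have a0 : forall u, (1 <= u)%N -> 0 <= a u.
  move=> u u1; rewrite /a; apply: mulr_ge0; last by [].
  by apply: mulr_ge0; [exact: ltW (hp u u1)|exact: dotp_ge0].
have B1 : forall t, (1 <= t)%N ->
    eta t * dotp (g t) (\sum_(1 <= s < t | ~~ S t s) g s)
    <= \sum_(1 <= s < t | (t <= s + tau)%N) (a t + a s).
  move=> t t1.
  rewrite dotp_sumr mulr_sumr big_mkcond [X in _ <= X]big_mkcond /=.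
  rewrite big_nat_cond [X in _ <= X]big_nat_cond.
  apply: ler_sum => s /andP[/andP[s1 st] _].
  case: (boolP (S t s)) => Sts; rewrite ?Sts /=.
    by case: ifP => // _; apply: addr_ge0; apply: a0.
  have -> : (t <= s + tau)%N.
    by case: leqP => // /(hS t s s1); rewrite (negbTE Sts).
  have ets : eta t <= eta s by apply: eta_mono => //; exact: ltnW.
  have hgt := dotp_ge0 (g t); have hgs := dotp_ge0 (g s).
  have h := dotp_ge0 (g t - g s).
  rewrite !(dotpDl, dotpDr, dotpNl, dotpNr) (dotpC (g s) (g t)) in h.
  have et0 := ltW (hp t t1).
  rewrite /a.
  have h1 : eta t * dotp (g s) (g s) <= eta s * dotp (g s) (g s) by exact: ler_wpM2r.
  have h2 : 0 <= eta t * (dotp (g t) (g t) + dotp (g s) (g s) - 2 * dotp (g t) (g s)).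
    by apply: mulr_ge0 => //; lra.
  rewrite !mulrDr mulrN in h2.
  lra.
have B2 : forall t, (1 <= t)%N ->
    \sum_(1 <= s < t | (t <= s + tau)%N) a t <= tau%:R * a t.
  move=> t t1; apply: (@sum_const_window R _ 1 t (t - tau) tau _ (a0 t t1)) => i /andP[i1 it] hi.
  apply/andP; split; lia.
have B3 : \sum_(1 <= t < T.+1) \sum_(1 <= s < t | (t <= s + tau)%N) a s
    <= \sum_(1 <= s < T.+1) tau%:R * a s.
  have -> : \sum_(1 <= t < T.+1) \sum_(1 <= s < t | (t <= s + tau)%N) a s =
      \sum_(1 <= t < T.+1) \sum_(1 <= s < T.+1) (if ((t <= s + tau) && (s < t))%N then a s else 0).
    rewrite big_nat_cond [RHS]big_nat_cond.
    apply: eq_bigr => t /andP[/andP[t1 tT] _].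
    rewrite (@big_nat_widen _ _ _ 1 t T.+1 _ _ (ltnW tT)) big_mkcond /=.
    by apply: eq_bigr => s _.
  rewrite exchange_big /=.
  rewrite big_nat_cond [X in _ <= X]big_nat_cond.
  apply: ler_sum => s /andP[/andP[s1 sT] _].
  rewrite -big_mkcond /=.
  apply: (@sum_const_window R _ 1 T.+1 s.+1 tau _ (a0 s s1)) => i /andP[i1 iT] /andP[hi si].
  apply/andP; split; lia.
apply: (@le_trans _ _ (\sum_(1 <= t < T.+1) \sum_(1 <= s < t | (t <= s + tau)%N) (a t + a s))).
  rewrite big_nat_cond [X in _ <= X]big_nat_cond.
  by apply: ler_sum => t /andP[/andP[t1 tT] _]; apply: B1.
have -> : \sum_(1 <= t < T.+1) \sum_(1 <= s < t | (t <= s + tau)%N) (a t + a s) =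
   \sum_(1 <= t < T.+1) \sum_(1 <= s < t | (t <= s + tau)%N) a t +
   \sum_(1 <= t < T.+1) \sum_(1 <= s < t | (t <= s + tau)%N) a s.
  by rewrite -big_split /=; apply: eq_bigr => t _; rewrite big_split.
have -> : \sum_(1 <= t < T.+1) tau%:R * eta t * dotp (g t) (g t) =
   \sum_(1 <= t < T.+1) tau%:R * a t + \sum_(1 <= t < T.+1) tau%:R * a t.
  by rewrite -big_split /=; apply: eq_bigr => t _; rewrite /a; field.
apply: lerD; last exact: B3.
rewrite big_nat_cond [X in _ <= X]big_nat_cond.
by apply: ler_sum => t /andP[/andP[t1 tT] _]; apply: B2.
Qed.
End PB.

Section PC.
Context {R : realType} {n : nat}.
Notation V := 'rV[R]_n.

Lemma partC0 (c u w : V) (L gam : R) :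
  dotp w w <= L ^+ 2 * (gam ^+ 2 * dotp c c) -> 0 <= gam -> 2 * gam ^+ 2 * L ^+ 2 <= 1 ->
  - (gam * dotp (c + u + w) c) <= gam * dotp u u - gam / 2 * dotp (c + u + w) (c + u + w).
Proof.
move=> hw g0 hL.
have hc := dotp_ge0 c.
have h : 0 <= gam * dotp (u - w) (u - w) by apply: mulr_ge0 => //; exact: dotp_ge0.
have k1 : gam * dotp w w <= gam * (L ^+ 2 * (gam ^+ 2 * dotp c c)) by exact: ler_wpM2l.
have k2 : 0 <= gam * dotp c c * (1 - 2 * gam ^+ 2 * L ^+ 2).
  by apply: mulr_ge0; [exact: mulr_ge0|lra].
rewrite !(dotpDl, dotpDr, dotpNl, dotpNr) in h *.
rewrite (dotpC u c) (dotpC w c) (dotpC w u) in h *.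
rewrite !mulrDr !mulrN in h.
have e1 : gam * (L ^+ 2 * (gam ^+ 2 * dotp c c)) = 
   gam * dotp c c / 2 - gam * dotp c c * (1 - 2 * gam ^+ 2 * L ^+ 2) / 2 by field.
rewrite e1 in k1.
lra.
Qed.

Lemma partC (Vt : V -> V) (L : R) (xt c : V) (gam : R) :
  lipschitz_vf L Vt -> 0 <= gam -> 2 * gam ^+ 2 * L ^+ 2 <= 1 ->
  - (gam * dotp (Vt (xt - gam *: c)) c)
  <= gam * dotp (Vt xt - c) (Vt xt - c)
     - gam / 2 * dotp (Vt (xt - gam *: c)) (Vt (xt - gam *: c)).
Proof.
move=> [L0 hL] g0 hg.
set g := Vt (xt - gam *: c).
have eg : g = c + (Vt xt - c) + (g - Vt xt).
  by rewrite [c + _]addrC subrK addrC subrK.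
rewrite eg; apply: (@partC0 c (Vt xt - c) (g - Vt xt) L gam) => //.
have := hL (xt - gam *: c) xt.
rewrite -/g (_ : xt - gam *: c - xt = - (gam *: c)); last first.
  by rewrite addrC addKr.
move=> hle.
have ge := enorm_ge0 (g - Vt xt).
have ge' := enorm_ge0 (- (gam *: c)).
have : enorm (g - Vt xt) ^+ 2 <= (L * enorm (- (gam *: c))) ^+ 2.
  by rewrite lerXn2r // ?nnegrE //; apply: mulr_ge0.
rewrite exprMn !enorm_sq dotpNl dotpNr opprK dotpZl dotpZr mulrA -expr2.
by [].
Qed.
End PC.

Lemma main_alg (R : realType) (n : nat)
  (f : nat -> 'rV[R]_n -> R) (V : nat -> 'rV[R]_n -> 'rV[R]_n) (L : R)
  (S : nat -> nat -> bool) (tau : nat) (eta gamma : nat -> R)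
  (x xh : nat -> 'rV[R]_n) (x1 : 'rV[R]_n) (T : nat) (p : 'rV[R]_n)
  (c : nat -> 'rV[R]_n) :
  (forall t, convexf (f t)) ->
  (forall t, has_gradient (f t) (V t)) ->
  (forall t, lipschitz_vf L (V t)) ->
  (forall t s, (1 <= s)%N -> (s + tau < t)%N -> S t s) ->
  (forall t, (1 <= t)%N -> 0 < eta t) ->
  (forall t, (1 <= t)%N -> eta t.+1 <= eta t) ->
  (forall t, (1 <= t)%N -> (2 * tau + 1)%:R * eta t <= gamma t) ->
  (forall t, (1 <= t)%N -> 2 * gamma t ^+ 2 * L ^+ 2 <= 1) ->
  (forall t, (1 <= t)%N ->
     x t = x1 - eta t *: \sum_(1 <= s < t | S t s) V s (xh s)) ->
  (forall t, (1 <= t)%N -> xh t = x t - gamma t *: c t) ->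
  (1 <= T)%N ->
  \sum_(1 <= t < T.+1) (f t (xh t) - f t p)
    <= dotp (p - x1) (p - x1) / (2 * eta T)
       + \sum_(1 <= t < T.+1) gamma t * dotp (V t (x t) - c t) (V t (x t) - c t).
Proof.
move=> hconv hgrad hlip hS hp hm hgam hL hx hxh T1.
pose g s := V s (xh s).
pose Z t := \sum_(1 <= s < t) g s.
pose dl t := \sum_(1 <= s < t | ~~ S t s) g s.
have key : forall t, (1 <= t)%N ->
  f t (xh t) - f t p <=
    (dotp (g t) (x1 - p) - eta t * dotp (g t) (Z t))
    + eta t * dotp (g t) (dl t)
    + (gamma t * dotp (V t (x t) - c t) (V t (x t) - c t)
       - gamma t / 2 * dotp (g t) (g t)).
  move=> t t1.
  have g0 : 0 <= gamma t.
    apply: le_trans (hgam t t1); apply: mulr_ge0; first by [].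
    exact: ltW (hp t t1).
  have hC := @partC R n (V t) L (x t) (c t) (gamma t) (hlip t) g0 (hL t t1).
  rewrite -(hxh t t1) -/(g t) in hC.
  apply: le_trans (@conv_grad R n (f t) (V t) (xh t) p (hconv t) (hgrad t)) _.
  rewrite -/(g t).
  have eZ : Z t = \sum_(1 <= s < t | S t s) g s + dl t.
    by rewrite /Z /dl (bigID (fun s => S t s)) /=.
  have eZd : dotp (g t) (Z t) = dotp (g t) (\sum_(1 <= s < t | S t s) V s (xh s)) + dotp (g t) (dl t).
    by rewrite eZ dotpDr.
  set E := gamma t * dotp (V t (x t) - c t) (V t (x t) - c t) in hC *.
  rewrite (hxh t t1) {1}(hx t t1).
  rewrite !(dotpDr, dotpNr, dotpZr).
  rewrite eZd mulrDr; lra.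
apply: (@le_trans _ _ (\sum_(1 <= t < T.+1) ((dotp (g t) (x1 - p) - eta t * dotp (g t) (Z t))
    + eta t * dotp (g t) (dl t)
    + (gamma t * dotp (V t (x t) - c t) (V t (x t) - c t)
       - gamma t / 2 * dotp (g t) (g t))))).
  rewrite big_nat_cond [X in _ <= X]big_nat_cond.
  by apply: ler_sum => t /andP[/andP[t1 tT] _]; apply: key.
rewrite !big_split /=.
rewrite !sumrN.
have hA : \sum_(1 <= t < T.+1) dotp (g t) (x1 - p) - \sum_(1 <= t < T.+1) eta t * dotp (g t) (Z t)
  <= dotp (p - x1) (p - x1) / (2 * eta T) + \sum_(1 <= t < T.+1) eta t / 2 * dotp (g t) (g t).
  by rewrite -sumrB; exact: (@partA R n g eta x1 p T hp hm T1).
have hB : \sum_(1 <= t < T.+1) eta t * dotp (g t) (dl t)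
    <= \sum_(1 <= t < T.+1) tau%:R * eta t * dotp (g t) (g t) :=
  @partB R n g eta S tau T hS hp hm.
have hfin : \sum_(1 <= t < T.+1) eta t / 2 * dotp (g t) (g t)
   + \sum_(1 <= t < T.+1) tau%:R * eta t * dotp (g t) (g t)
   - \sum_(1 <= t < T.+1) gamma t / 2 * dotp (g t) (g t) <= 0.
  rewrite -big_split -sumrB /=.
  rewrite big_nat_cond; apply: sumr_le0 => t /andP[/andP[t1 tT] _].
  have := hgam t t1; have := dotp_ge0 (g t); have := hp t t1.
  rewrite natrD natrM mulrDl mul1r.
  move=> e0 gg0 hg.
  have : 0 <= (gamma t - (2 * tau%:R * eta t + eta t)) * dotp (g t) (g t).
    by apply: mulr_ge0 => //; lra.
  lra.
lra.
Qed.
Theorem theorem7 (R : realType) (n : nat)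
  (* losses f_t and their gradients V_t, t = 1, 2, ... *)
  (f : nat -> 'rV[R]_n -> R) (V : nat -> 'rV[R]_n -> 'rV[R]_n) (L : R)
  (* agents: agent t is the agent active at round t *)
  (A : Type) (agent : nat -> A)
  (* S t s  <->  s \in S_t *)
  (S : nat -> nat -> bool) (tau : nat)
  (* guess index: sigma t = Some s means tilde V_t = V_s; None means tilde V_t = 0 *)
  (sigma : nat -> option nat)
  (eta gamma : nat -> R)
  (x : nat -> 'rV[R]_n) (xh : nat -> 'rV[R]_n) (x1 : 'rV[R]_n)
  (T : nat) (p : 'rV[R]_n) :
  (forall t, convexf (f t)) ->
  (forall t, has_gradient (f t) (V t)) ->
  (forall t, lipschitz_vf L (V t)) ->
  (forall t s, S t s -> (1 <= s < t)%N) ->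
  (forall t t', (1 <= t <= t')%N -> agent t = agent t' ->
     forall s, S t s -> S t' s) ->
  (forall t s, (1 <= s)%N -> (s + tau < t)%N -> S t s) ->
  (forall t, (1 <= t)%N ->
     match sigma t with
     | Some s => is_true (S t s)
     | None => forall s, ~~ S t s
     end) ->
  (forall t, (1 <= t)%N -> 0 < eta t) ->
  (forall t, (1 <= t)%N -> eta t.+1 <= eta t) ->
  (forall t, (1 <= t)%N -> (2 * tau + 1)%:R * eta t <= gamma t) ->
  (forall t, (1 <= t)%N -> 2 * gamma t ^+ 2 * L ^+ 2 <= 1) ->
  (* DODA iterates *)
  (forall t, (1 <= t)%N ->
     x t = x1 - eta t *: \sum_(1 <= s < t | S t s) V s (xh s)) ->
  (forall t, (1 <= t)%N ->
     xh t = x t - gamma t *: (match sigma t with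
                              | Some s => V s (x t)
                              | None => 0
                              end)) ->
  (1 <= T)%N ->
  \sum_(1 <= t < T.+1) (f t (xh t) - f t p)
    <= dotp (p - x1) (p - x1) / (2 * eta T)
       + \sum_(1 <= t < T.+1)
           gamma t * dotp (V t (x t) - (match sigma t with
                                        | Some s => V s (x t)
                                        | None => 0
                                        end))
                          (V t (x t) - (match sigma t with
                                        | Some s => V s (x t)
                                        | None => 0
                                        end)).
Proof.
move=> hconv hgrad hlip hSr hag hwin hsig hp hm hgam hL hx hxh T1.
exact: (@main_alg R n f V L S tau eta gamma x xh x1 T p
  (fun t => match sigma t with Some s => V s (x t) | None => 0 end)
  hconv hgrad hlip hwin hp hm hgam hL hx hxh T1).
Qed.
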